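(* Let $g\ge2$, $A\ge1$, $k\ge1$ and let $f_1(q),\dots,f_g(q)$ be power series with complex coefficients, each of order of magnitude $(A,k)$. Then the wronskian $W_{\mathbf f}(q)$ is a power series of order of magnitude $\left(g!\,A^g\,2^{\frac{g(g-1)(g+3k-2)}{6}},\ gk-1+\frac{g(g+1)}{2}\right)$.
   Context: A power series $h=\sum_{m\ge0}h_mq^m$ has order of magnitude $(A,n)$ ($A\ge1$ real, $n\ge1$ integer) if $|h_m|\le A(m+1)^n$ for all $m$. For $\mathbf f=(f_1,\dots,f_g)$ the wronskian is $W_{\mathbf f}(q)=\det\big(f_j^{(i)}(q)\big)_{0\le i\le g-1,\,1\le j\le g}$, where $f^{(i)}$ is the $i$-th derivative. *)

(* Defs.v *)
From HB Require Import structures.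
From mathcomp Require Import all_boot all_order all_algebra.
From mathcomp Require Import fingroup perm.
From mathcomp Require Import complex.
From mathcomp Require Import reals.
Set Implicit Arguments. Unset Strict Implicit. Unset Printing Implicit Defensive.
Import Order.TTheory GRing.Theory Num.Theory.
Local Open Scope ring_scope.

(* A formal power series sum_m h_m q^m is represented by its coefficient
   sequence h : nat -> R[i]. *)
Definition pseries (R : realType) := nat -> R[i].

Definition ps_mul (R : realType) (a b : pseries R) : pseries R :=
  fun m => \sum_(i < m.+1) a i * b (m - i)%N.

Definition ps_one (R : realType) : pseries R := fun m => if m == 0%N then 1 else 0.

Definition ps_deriv (R : realType) (a : pseries R) : pseries R :=
  fun m => (m.+1)%:R * a m.+1.

Definition ps_derivn (R : realType) (i : nat) (a : pseries R) : pseries R :=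
  iter i (@ps_deriv R) a.

Definition ps_prod (R : realType) (g : nat) (F : 'I_g -> pseries R) : pseries R :=
  foldr (fun i acc => ps_mul (F i) acc) (@ps_one R) (enum 'I_g).

(* Wronskian W_f = det (f_j^(i))_{0<=i<=g-1, 1<=j<=g}, expanded by the Leibniz
   formula  det M = sum_s sign(s) prod_i M i (s i), in the ring of power series. *)
Definition wronskian (R : realType) (g : nat) (f : 'I_g -> pseries R) : pseries R :=
  fun m => \sum_(s : 'S_g) (-1) ^+ s * ps_prod (fun i => ps_derivn i (f (s i))) m.

Definition order_of_magnitude (R : realType) (h : pseries R) (A : R) (n : nat) : Prop :=
  1 <= A /\ (1 <= n)%N /\ forall m : nat, ComplexField.Normc.normc (h m) <= A * (m.+1)%:R ^+ n.

(* Main.v *)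
Require Import Defs.
From HB Require Import structures.
From mathcomp Require Import all_boot all_order all_algebra.
From mathcomp Require Import fingroup perm.
From mathcomp Require Import complex.
From mathcomp Require Import reals.
From mathcomp Require Import zify ring lra.
Import Order.TTheory GRing.Theory Num.Theory.
Set Implicit Arguments. Unset Strict Implicit. Unset Printing Implicit Defensive.
Local Open Scope ring_scope.

Section Aux.
Variable R : realType.
Local Notation nc := (@ComplexField.Normc.normc R).

Lemma leq_of_eq (x y : R) : x = y -> x <= y.
Proof. by move->. Qed.

Definition bnd (h : pseries R) (C : R) (n : nat) :=
  forall m : nat, nc (h m) <= C * (m.+1)%:R ^+ n.

Lemma nc_ge0 (x : R[i]) : 0 <= nc x.
Proof. by case: x => a b; rewrite /ComplexField.Normc.normc sqrtr_ge0. Qed.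

Lemma nc_nat (n : nat) : nc n%:R = n%:R.
Proof. by rewrite normcMn ComplexField.Normc.normc1. Qed.

Lemma nc_sign (b : nat) (x : R[i]) : nc ((-1) ^+ b * x) = nc x.
Proof.
rewrite ComplexField.Normc.normcM; elim: b => [|b IH].
  by rewrite expr0 ComplexField.Normc.normc1 mul1r.
by rewrite exprS ComplexField.Normc.normcM normcN ComplexField.Normc.normc1 mul1r.
Qed.

Lemma nc_sum (I : Type) (r : seq I) (P : pred I) (F : I -> R[i]) :
  nc (\sum_(i <- r | P i) F i) <= \sum_(i <- r | P i) nc (F i).
Proof.
elim/big_rec2: _ => [|i y1 y2 _ H].
  by rewrite ComplexField.Normc.normc0.
by apply: le_trans (le_normcD _ _) _; rewrite lerD2l.
Qed.

Lemma bnd_ge0 h C n : bnd h C n -> 0 <= C.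
Proof.
move=> /(_ 0%N); rewrite expr1n mulr1; exact: le_trans (nc_ge0 _).
Qed.

Lemma bnd_deriv h C n : bnd h C n -> bnd (@ps_deriv R h) (C * 2%:R ^+ n) n.+1.
Proof.
move=> H m; have C0 := bnd_ge0 H.
rewrite /ps_deriv ComplexField.Normc.normcM nc_nat.
apply: le_trans (ler_wpM2l (ler0n _ _) (H m.+1)) _.
have h1 : (m.+2)%:R <= 2%:R * (m.+1)%:R :> R.
  by rewrite -natrM ler_nat; lia.
have h2 : (m.+2)%:R ^+ n <= (2%:R * (m.+1)%:R) ^+ n :> R.
  by apply: lerXn2r; rewrite // qualifE /= ?ler0n // mulr_ge0 ?ler0n.
apply: (@le_trans _ _ ((m.+1)%:R * (C * (2%:R * (m.+1)%:R) ^+ n))).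
  by apply: ler_wpM2l => //; apply: ler_wpM2l.
by rewrite exprMn exprS; apply: leq_of_eq; ring.
Qed.

Lemma bnd_derivn h C n i : bnd h C n ->
  bnd (@ps_derivn R i h) (C * 2%:R ^+ (\sum_(j < i) (n + j))) (n + i).
Proof.
move=> H; elim: i => [|i IH].
  by rewrite /ps_derivn /= big_ord0 expr0 mulr1 addn0.
rewrite /ps_derivn iterS -/(ps_derivn i h) big_ord_recr /= exprD mulrA addnS.
exact: bnd_deriv.
Qed.

Lemma ps_mul_one (a : pseries R) m : ps_mul a (@ps_one R) m = a m.
Proof.
rewrite /ps_mul big_ord_recr /= subnn /ps_one eqxx mulr1 big1 ?add0r //.
move=> i _; have : (m - i)%N != 0%N by rewrite subn_eq0 -ltnNge ltn_ord.
by move/negbTE => ->; rewrite mulr0.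
Qed.

Lemma bnd_mul a b Ca Cb na nb : bnd a Ca na -> bnd b Cb nb ->
  bnd (ps_mul a b) (Ca * Cb) (na + nb).+1.
Proof.
move=> Ha Hb m; have Ca0 := bnd_ge0 Ha; have Cb0 := bnd_ge0 Hb.
rewrite /ps_mul; apply: le_trans (nc_sum _ _ _) _.
apply: (@le_trans _ _ (\sum_(i < m.+1) Ca * Cb * (m.+1)%:R ^+ (na + nb))).
  apply: ler_sum => i _; rewrite ComplexField.Normc.normcM.
  have hi : (i.+1)%:R ^+ na <= (m.+1)%:R ^+ na :> R.
    by apply: lerXn2r; rewrite // ?qualifE /= ?ler0n // ler_nat ltn_ord.
  have hj : ((m - i).+1)%:R ^+ nb <= (m.+1)%:R ^+ nb :> R.
    by apply: lerXn2r; rewrite // ?qualifE /= ?ler0n // ler_nat; lia.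
  apply: le_trans (ler_pM (nc_ge0 _) (nc_ge0 _) (Ha i) (Hb (m - i)%N)) _.
  rewrite exprD mulrACA; apply: ler_wpM2l; first by rewrite mulr_ge0.
  by apply: ler_pM => //; rewrite exprn_ge0.
by rewrite sumr_const card_ord -mulr_natr exprS; apply: leq_of_eq; ring.
Qed.

Lemma bnd_one : bnd (@ps_one R) 1 0.
Proof.
move=> m; rewrite expr0 mulr1 /ps_one; case: eqP => _.
  by rewrite ComplexField.Normc.normc1.
by rewrite ComplexField.Normc.normc0.
Qed.

Lemma bnd_foldr (I : Type) (F : I -> pseries R) (C : I -> R) (n : I -> nat)
  (l : seq I) : (forall i, bnd (F i) (C i) (n i)) ->
  bnd (foldr (fun i acc => ps_mul (F i) acc) (@ps_one R) l)
      (\prod_(i <- l) C i) (\sum_(i <- l) n i + size l).-1.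
Proof.
move=> H; elim: l => [|x l IH].
  by rewrite big_nil big_nil; exact: bnd_one.
case: l IH => [|y l] IH.
  move=> m; rewrite /= ps_mul_one big_cons big_nil big_cons big_nil mulr1.
  by rewrite addn0 addn1 /=; apply: H.
rewrite big_cons.
have -> : (\sum_(i <- [:: x, y & l]) n i + (size l).+2).-1 =
          (n x + (\sum_(i <- y :: l) n i + (size (y :: l))).-1).+1.
  by rewrite big_cons /=; lia.
exact: bnd_mul.
Qed.

End Aux.

Lemma nat_T (g k : nat) : (2 * \sum_(i < g) (k + i) = 2 * g * k + g * (g - 1))%N.
Proof.
elim: g => [|g IH]; first by rewrite big_ord0.
rewrite big_ord_recr /= mulnDr IH; case: g {IH} => [|g]; rewrite ?subn1 /=; ring.
Qed.
Lemma nat_S (g k : nat) : (0 < k)%N ->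
  (6 * \sum_(i < g) \sum_(j < i) (k + j) = g * (g - 1) * (g + 3 * k - 2))%N.
Proof.
move=> k0; elim: g => [|g IH]; first by rewrite big_ord0.
rewrite big_ord_recr /= mulnDr IH; clear IH.
have := nat_T g k.
have -> : (6 = 3 * 2)%N by [].
rewrite -!mulnA => ->.
case: k k0 => [|k] // _; case: g => [|g]; rewrite ?subn1 /=.
  by rewrite !mul0n.
have -> : (g.+1 + 3 * k.+1 - 2 = g + 3 * k + 2)%N by lia.
have -> : (g.+2 + 3 * k.+1 - 2 = g + 3 * k + 3)%N by lia.
ring.
Qed.

Lemma nat_sumi (g : nat) : (2 * \sum_(i < g) i = g * (g - 1))%N.
Proof.
elim: g => [|g IH]; first by rewrite big_ord0.
rewrite big_ord_recr /= mulnDr IH; case: g {IH} => [|g]; rewrite ?subn1 /=; ring.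
Qed.

Theorem mainTheorem6 (R : realType) (g : nat) (A : R) (k : nat)
  (f : 'I_g -> pseries R) :
  (2 <= g)%N -> 1 <= A -> (1 <= k)%N ->
  (forall j : 'I_g, order_of_magnitude (f j) A k) ->
  order_of_magnitude (wronskian f)
    ((g`!)%:R * A ^+ g * 2%:R ^+ ((g * (g - 1) * (g + 3 * k - 2)) %/ 6))
    (g * k - 1 + (g * (g + 1)) %/ 2)%N.
Proof.
move=> g2 A1 k1 Hf.
have A0 : 0 <= A by apply: le_trans A1.
split.
  have h1 : (1 : R) <= (g`!)%:R by rewrite ler1n fact_gt0.
  have h2 : (1 : R) <= A ^+ g by apply: exprn_ege1.
  have h3 : (1 : R) <= 2%:R ^+ ((g * (g - 1) * (g + 3 * k - 2)) %/ 6).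
    by apply: exprn_ege1; rewrite ler1n.
  have h4 := ler_pM ler01 ler01 h1 h2; rewrite mul1r in h4.
  by have := ler_pM ler01 ler01 h4 h3; rewrite mul1r.
split; first by lia.
set E := (\sum_(i < g) \sum_(j < i) (k + j))%N.
set N := (\sum_(i < g) (k + i) + g).-1.
have HE : (E <= (g * (g - 1) * (g + 3 * k - 2)) %/ 6)%N.
  by rewrite leq_divRL // mulnC nat_S.
have HN : (N <= g * k - 1 + (g * (g + 1)) %/ 2)%N.
  have HS := nat_sumi g.
  rewrite /N big_split /= sum_nat_const card_ord.
  set Si := (\sum_(i < g) i)%N in HS *.
  have -> : (g * (g + 1) = (Si + g) * 2)%N.
    rewrite mulnDl [(Si * 2)%N]mulnC HS; clear HS HE Hf E N Si; case: g g2 f => [|[|g]] //= _ _.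
    rewrite !subn1 /=; ring.
  rewrite mulnK //.
  have : (0 < g * k)%N by rewrite muln_gt0; apply/andP; split; lia.
  lia.
have Hb : forall s : 'S_g,
  bnd (ps_prod (fun i => ps_derivn i (f (s i)))) (A ^+ g * 2%:R ^+ E) N.
  move=> s; rewrite /ps_prod.
  have := bnd_foldr (enum 'I_g) (F := fun i : 'I_g => ps_derivn i (f (s i)))
    (C := fun i : 'I_g => A * 2%:R ^+ (\sum_(j < i) (k + j)))
    (n := fun i : 'I_g => (k + i)%N).
  rewrite !big_enum /= size_enum_ord big_split /= prodr_const cardT size_enum_ord.
  rewrite -big_enum prodrXr big_enum /=.
  have H : forall i : 'I_g,
     bnd (ps_derivn i (f (s i))) (A * 2%:R ^+ (\sum_(j < i) (k + j))) (k + i).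
    by move=> i; apply: bnd_derivn; case: (Hf (s i)) => _ [_].
  move=> /(_ H).
  by rewrite /N /E big_split /=.
move=> m; rewrite /wronskian.
apply: le_trans (nc_sum _ _ _) _.
apply: (@le_trans _ _ (\sum_(s : 'S_g) A ^+ g * 2%:R ^+ E * (m.+1)%:R ^+ N)).
  by apply: ler_sum => s _; rewrite nc_sign; apply: Hb.
rewrite sumr_const card_Sn -[_ *+ g`!]mulr_natl -!mulrA; apply: ler_wpM2l => //.
apply: ler_pM; rewrite ?exprn_ge0 //; first by rewrite mulr_ge0 ?exprn_ge0.
apply: ler_pM; rewrite ?exprn_ge0 //.
  by apply: ler_weXn2l => //; rewrite ler1n.
by apply: ler_weXn2l => //; rewrite ler1n.
Qed.
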